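(* Let $K\ge 1$, $m\ge 1$, and let $\mathcal L_1,\dots,\mathcal L_K:\mathbb R^m\to[0,\infty)$ be differentiable functions such that each $\mathcal L_k$ is $\nu_k$-smooth. Write $\boldsymbol{\mathcal L}(\vartheta)=(\mathcal L_1(\vartheta),\dots,\mathcal L_K(\vartheta))$. For every $\boldsymbol\lambda\in\Delta^K$ let $\vartheta_{\boldsymbol\lambda}\in\mathbb R^m$ be a minimizer of a fixed scalarization $s_{\boldsymbol\lambda}\circ\boldsymbol{\mathcal L}$ (in item 1, of the linear scalarization $\sum_k\lambda_k\mathcal L_k$), and let $\widehat\vartheta_{\boldsymbol\lambda}\in\mathbb R^m$ be arbitrary. Put $G_k:=\sup_{\boldsymbol\lambda\in\Delta^K}\|\nabla\mathcal L_k(\vartheta_{\boldsymbol\lambda})\|_2$, and for $G,\nu\ge 0$ $$\varepsilon(G,\nu,\boldsymbol\lambda):=G\|\widehat\vartheta_{\boldsymbol\lambda}-\vartheta_{\boldsymbol\lambda}\|_2+\tfrac{\nu}{2}\|\widehat\vartheta_{\boldsymbol\lambda}-\vartheta_{\boldsymbol\lambda}\|_2^2,\qquad \varepsilon_{\max}:=\max_{k\in[K],\,\boldsymbol\lambda\in\Delta^K}\varepsilon(G_k,\nu_k,\boldsymbol\lambda).$$ Then: 1. For linear scalarization, $\sum_k\lambda_k\mathcal L_k(\widehat\vartheta_{\boldsymbol\lambda})-\min_{\vartheta}\sum_k\lambda_k\mathcal L_k(\vartheta)\le \varepsilon\big(0,\sum_k\lambda_k\nu_k,\boldsymbol\lambda\big)$.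 2. For all $k$ and $\boldsymbol\lambda$, $\mathcal L_k(\widehat\vartheta_{\boldsymbol\lambda})-\mathcal L_k(\vartheta_{\boldsymbol\lambda})\le\varepsilon(G_k,\nu_k,\boldsymbol\lambda)$. 3. Let $\mathrm{PF}=\{\boldsymbol{\mathcal L}(\vartheta_{\boldsymbol\lambda}):\boldsymbol\lambda\in\Delta^K\}$ and $\widehat{\mathrm{PF}}=\{\boldsymbol{\mathcal L}(\widehat\vartheta_{\boldsymbol\lambda}):\boldsymbol\lambda\in\Delta^K\}$, and let $r\ge 2\sup_{\boldsymbol\lambda\in\Delta^K}\|\boldsymbol{\mathcal L}(\vartheta_{\boldsymbol\lambda})\|_\infty$ be such that $\widehat{\mathrm{PF}}\subset[0,r]^K$ and $\varepsilon_{\max}\le r/2$. Then $\mathrm{HV}_r(\widehat{\mathrm{PF}})\ge(1-2\varepsilon_{\max}/r)^K\,\mathrm{HV}_r(\mathrm{PF})$.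
   Context: $\Delta^K=\{\boldsymbol\lambda\in\mathbb R^K:\lambda_k\ge0,\sum_k\lambda_k=1\}$. A scalarization is a function $s_{\boldsymbol\lambda}:\mathbb R^K\to\mathbb R$ indexed by $\boldsymbol\lambda\in\Delta^K$; linear scalarization is $s_{\boldsymbol\lambda}(x)=\sum_k\lambda_kx_k$. A differentiable $f$ is $\nu$-smooth if $\nabla f$ is $\nu$-Lipschitz in $\ell_2$. For $\mathcal S\subset[0,r]^K$ the hypervolume is $\mathrm{HV}_r(\mathcal S)=\mathrm{vol}(\{x\in[0,r]^K:\exists s\in\mathcal S,\ s\preceq x\})$, where $\mathrm{vol}$ is Lebesgue measure on $\mathbb R^K$ and $s\preceq x$ means $s_i\le x_i$ for all $i$. *)

(* Defs.v *)
From mathcomp Require Import all_boot all_order all_algebra.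
From mathcomp Require Import all_classical all_reals all_analysis.
Set Implicit Arguments.
Unset Strict Implicit.
Unset Printing Implicit Defensive.
Import Order.TTheory GRing.Theory Num.Theory.
Import numFieldNormedType.Exports.
Local Open Scope classical_set_scope.
Local Open Scope ring_scope.

Section Defs.
Variable R : realType.

Definition l2norm (m : nat) (v : 'rV[R]_m) : R :=
  Num.sqrt (\sum_(i < m) (v 0 i) ^+ 2).

Definition grad (m : nat) (f : 'rV[R]_m -> R) (x : 'rV[R]_m) : 'rV[R]_m :=
  \row_(i < m) ('D_(delta_mx 0 i) f x).

Definition smooth (m : nat) (nu : R) (f : 'rV[R]_m -> R) : Prop :=
  (forall x, differentiable f x) /\
  (forall x y, l2norm (grad f x - grad f y) <= nu * l2norm (x - y)).

Definition simplex (K : nat) : set ('I_K -> R) :=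
  [set l | (forall k, 0 <= l k) /\ \sum_(k < K) l k = 1].

Definition linscal (K : nat) (l x : 'I_K -> R) : R := \sum_(k < K) l k * x k.

Definition supnorm (K : nat) (x : 'I_K -> R) : R := \big[Num.max/0]_(k < K) `|x k|.

Definition box (K : nat) (a b : 'I_K -> R) : set ('I_K -> R) :=
  [set x | forall i, a i <= x i <= b i].
Definition box_vol (K : nat) (a b : 'I_K -> R) : R :=
  \prod_(i < K) Num.max (b i - a i) 0.

(* Lebesgue (outer) measure on R^K: infimum of total volumes of countable
   box covers.  Coincides with Lebesgue measure on Lebesgue measurable sets. *)
Definition vol (K : nat) (A : set ('I_K -> R)) : \bar R :=
  ereal_inf [set v | exists (a b : nat -> 'I_K -> R),
     A `<=` \bigcup_n box (a n) (b n) /\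
     v = (\sum_(0 <= n <oo) (box_vol (a n) (b n))%:E)%E ].

Definition HV (K : nat) (r : R) (S : set ('I_K -> R)) : \bar R :=
  vol [set x | (forall i, 0 <= x i <= r) /\
               exists2 s, S s & forall i, s i <= x i].

End Defs.

(* Main.v *)
Require Import Defs.
From mathcomp Require Import all_boot all_order all_algebra.
From mathcomp Require Import all_classical all_reals all_analysis.
From mathcomp Require Import ring lra.
Import Order.TTheory GRing.Theory Num.Theory.
Import numFieldNormedType.Exports.
Local Open Scope classical_set_scope.
Local Open Scope ring_scope.

Set Implicit Arguments.
Unset Strict Implicit.
Section S.
Variable R : realType.

Definition dotr m (u v : 'rV[R]_m) : R := \sum_(i < m) u 0 i * v 0 i.

Lemma line_quot m (f : 'rV[R]_m -> R) x d t :
  (fun h : R => h^-1 *: (((fun u : R => f (x + u *: d)) \o shift t) (h *: (1:R)) - f (x + t *: d)))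
  = (fun h : R => h^-1 *: ((f \o shift (x + t *: d)) (h *: d) - f (x + t *: d))).
Proof.
apply/funext => h /=. congr (_ *: (f _ - _)).
rewrite /shift /=.
have -> : h%:A = h by rewrite /GRing.scale /= mulr1.
by rewrite scalerDl addrCA addrC.
Qed.

Lemma grad_dot m (f : 'rV[R]_m -> R) p d : differentiable f p ->
  'D_d f p = dotr (grad f p) d.
Proof.
move=> df; rewrite deriveE //.
rewrite {1}(row_sum_delta d) linear_sum /dotr; apply: eq_bigr => i _.
by rewrite linearZ /= /grad mxE deriveE // mulrC.
Qed.


Definition nsq m (v : 'rV[R]_m) : R := \sum_(i < m) (v 0 i) ^+ 2.

Lemma nsq_ge0 m (v : 'rV[R]_m) : 0 <= nsq v.
Proof. by apply: sumr_ge0 => i _; exact: sqr_ge0. Qed.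

Lemma l2norm_sqr m (v : 'rV[R]_m) : l2norm v ^+ 2 = nsq v.
Proof. by rewrite /l2norm sqr_sqrtr // nsq_ge0. Qed.

Lemma l2norm_ge0 m (v : 'rV[R]_m) : 0 <= l2norm v.
Proof. exact: sqrtr_ge0. Qed.

Lemma line_is_derive m (f : 'rV[R]_m -> R) (x d : 'rV[R]_m) (t : R) :
  (forall p, differentiable f p) ->
  is_derive t (1:R) (fun u : R => f (x + u *: d)) (dotr (grad f (x + t *: d)) d).
Proof.
move=> df; apply: DeriveDef.
  rewrite /derivable line_quot; exact: diff_derivable.
by rewrite /derive line_quot -/(derive f _ d) grad_dot.
Qed.


Lemma nsq0_coord m (u : 'rV[R]_m) : nsq u = 0 -> forall i, u 0 i = 0.
Proof.
move=> /eqP; rewrite psumr_eq0 => [/allP H i|i _]; last exact: sqr_ge0.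
by apply/eqP; rewrite -sqrf_eq0; apply: (implyP (H i _)); rewrite ?mem_index_enum.
Qed.

Lemma cauchy_schwarz m (u v : 'rV[R]_m) : dotr u v <= l2norm u * l2norm v.
Proof.
set A := l2norm u; set B := l2norm v.
have A0 : 0 <= A by exact: l2norm_ge0.
have B0 : 0 <= B by exact: l2norm_ge0.
have key : 2 * (A * B) * dotr u v <= 2 * (A * B) ^+ 2.
  have -> : 2 * (A * B) ^+ 2 = B ^+ 2 * nsq u + A ^+ 2 * nsq v.
    by rewrite -!l2norm_sqr -/A -/B; ring.
  rewrite /dotr /nsq !mulr_sumr -big_split /=; apply: ler_sum => i _.
  have := sqr_ge0 (u 0 i * B - v 0 i * A); nra.
have [AB0|ABp] := eqVneq (A * B) 0.
  move/eqP: AB0; rewrite mulf_eq0 => /orP[] /eqP H0.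
    have : nsq u = 0 by rewrite -l2norm_sqr -/A H0 expr0n.
    move/nsq0_coord => Hu; rewrite /dotr big1 ?H0 ?mul0r // => i _.
    by rewrite Hu mul0r.
  have : nsq v = 0 by rewrite -l2norm_sqr -/B H0 expr0n.
  move/nsq0_coord => Hv; rewrite /dotr big1 ?H0 ?mulr0 // => i _.
  by rewrite Hv mulr0.
have ABg : 0 < A * B by rewrite lt_def ABp mulr_ge0.
have H2 : 0 < 2 * (A * B) by rewrite mulr_gt0.
rewrite -(ler_pM2l H2); apply: (le_trans key); rewrite le_eqVlt; apply/orP; left; apply/eqP; ring.
Qed.


Lemma dotrB m (u w v : 'rV[R]_m) : dotr (u - w) v = dotr u v - dotr w v.
Proof. by rewrite /dotr -sumrB; apply: eq_bigr => i _; rewrite !mxE mulrBl. Qed.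

Lemma l2normZ m (t : R) (v : 'rV[R]_m) : l2norm (t *: v) = `|t| * l2norm v.
Proof.
rewrite /l2norm -sqrtr_sqr -sqrtrM ?sqr_ge0 //; congr Num.sqrt.
rewrite mulr_sumr; apply: eq_bigr => i _; rewrite mxE; ring.
Qed.

Lemma descent m nu (f : 'rV[R]_m -> R) x d : smooth nu f ->
  f (x + d) - f x <= dotr (grad f x) d + nu / 2 * nsq d.
Proof.
move=> [df Lip].
set c1 := dotr (grad f x) d; set c2 := nu / 2 * nsq d.
set gl := fun u : R => f (x + u *: d).
set h := gl - c1 \*: (@id R) - c2 \*: ((@id R) ^+ 2).
have hd : forall t, is_derive t (1:R) h
   (dotr (grad f (x + t *: d)) d - c1 *: (1:R) - c2 *: ((2%:R * t ^+ 1) *: (1:R))).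
  move=> t; apply: is_deriveB; first apply: is_deriveB.
  all: try exact: line_is_derive.
  all: try (apply: is_deriveZ; exact: is_derive_id).
  all: try (apply: is_deriveZ; apply: is_deriveX; exact: is_derive_id).
have hc : {within `[0, 1], continuous h}.
  apply: derivable_within_continuous => t _; exact: (@ex_derive _ _ _ _ _ _ _ (hd t)).
have [c] := MVT ltr01 (fun t _ => hd t) hc.
rewrite in_itv /= => /andP[c0 c1'] eqh.
have h1 : h 1 - h 0 <= 0.
  rewrite eqh subr0 mulr1 /GRing.scale /= !mulr1 /c1 -dotrB.
  have cs := cauchy_schwarz (grad f (x + c *: d) - grad f x) d.
  have := Lip (x + c *: d) x.
  rewrite addrAC subrr add0r l2normZ (ger0_norm (ltW c0)) => Lc.
  have nd := l2norm_ge0 d.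
  have Lc2 := ler_wpM2r nd Lc.
  have e3 := l2norm_sqr d.
  rewrite /c2; nra.
have hE : forall t, h t = f (x + t *: d) - c1 * t - c2 * (t * t) by [].
move: h1; rewrite !hE scale1r scale0r addr0 !mul0r mulr0 !subr0 !mul1r mulr1.
lra.
Qed.


Lemma dotrZ m (u v : 'rV[R]_m) t : dotr u (t *: v) = t * dotr u v.
Proof. by rewrite /dotr mulr_sumr; apply: eq_bigr => i _; rewrite mxE; ring. Qed.

Lemma nsqZ m (v : 'rV[R]_m) t : nsq (t *: v) = t ^+ 2 * nsq v.
Proof. by rewrite /nsq mulr_sumr; apply: eq_bigr => i _; rewrite mxE; ring. Qed.

Lemma descent_scaled m nu (f : 'rV[R]_m -> R) x d t : smooth nu f ->
  f (x + t *: d) - f x <= t * dotr (grad f x) d + nu / 2 * t ^+ 2 * nsq d.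
Proof.
move=> sf; have := descent x (t *: d) sf.
by rewrite dotrZ nsqZ mulrA.
Qed.

Lemma smooth_nu_ge0 m nu (f : 'rV[R]_m -> R) : (0 < m)%N -> smooth nu f -> 0 <= nu.
Proof.
move=> m0 [_ Lip]; have := le_trans (l2norm_ge0 _) (Lip (const_mx 1) 0).
rewrite subr0.
have -> : l2norm (const_mx 1 : 'rV[R]_m) = Num.sqrt m%:R.
  rewrite /l2norm; congr Num.sqrt.
  rewrite (eq_bigr (fun=> 1)) => [|i _]; first by rewrite sumr_const card_ord.
  by rewrite mxE expr1n.
have : 0 < Num.sqrt (m%:R : R) by rewrite sqrtr_gt0 ltr0n.
by move=> sp; rewrite pmulr_lge0.
Qed.

Lemma maxr_scale (c y : R) : 0 < c -> Num.max (y / c) 0 = c^-1 * Num.max y 0.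
Proof.
move=> c0; rewrite maxr_pMr ?invr_ge0 ?(ltW c0) // mulr0 (mulrC c^-1) //.
Qed.


Lemma box_vol_ge0 K (a b : 'I_K -> R) : 0 <= box_vol a b.
Proof.
apply: prodr_ge0 => i _; case: (lerP (b i - a i) 0) => h //.
exact: ltW.
Qed.

Lemma vol_scale K (e0 c : R) (A B : set ('I_K -> R)) : 0 < c ->
  (forall x, A x -> B (fun i => e0 + c * x i)) ->
  ((c ^+ K)%:E * vol A <= vol B)%E.
Proof.
move=> c0 AB; rewrite [vol B]/vol; apply: le_ereal_inf_tmp.
move=> v [a [b [cov ->]]].
set a' := fun n i => (a n i - e0) / c.
set b' := fun n i => (b n i - e0) / c.
have bv : forall n, box_vol (a' n) (b' n) = c^-1 ^+ K * box_vol (a n) (b n).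
  move=> n; rewrite /box_vol.
  have -> : c^-1 ^+ K = \prod_(i < K) c^-1 by rewrite prodr_const card_ord.
  rewrite -big_split /=.
  apply: eq_bigr => i _; rewrite -maxr_scale //; congr Num.max.
  rewrite /a' /b'; field; exact: lt0r_neq0.
have vA : (vol A <= \sum_(0 <= n <oo) (box_vol (a' n) (b' n))%:E)%E.
  apply: ereal_inf_lbound; exists a', b'; split => //.
  move=> x /AB /cov [n _ /= hn]; exists n => //= i.
  have /andP[h1 h2] := hn i.
  rewrite /a' /b' !ler_pdivrMr ?ler_pdivlMr //.
  by apply/andP; split; lra.
have eqS : (\sum_(0 <= n <oo) (box_vol (a' n) (b' n))%:E =
      (c^-1 ^+ K)%:E * \sum_(0 <= n <oo) (box_vol (a n) (b n))%:E)%E.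
  rewrite -nneseriesZl; last by move=> n _; rewrite lee_fin box_vol_ge0.
  by apply: eq_eseriesr => n _; rewrite bv EFinM.
rewrite eqS in vA; move: vA => /(lee_wpmul2l (x := (c ^+ K)%:E)) H.
apply: le_trans (H _) _; first by rewrite lee_fin exprn_ge0 // ltW.
rewrite muleA -EFinM exprVn mulfV ?mul1e //.
by rewrite expf_neq0 // lt0r_neq0.
Qed.


Lemma lin_bound K m (L : 'I_K -> 'rV[R]_m -> R) (nu l : 'I_K -> R) x d t :
  (forall k, smooth (nu k) (L k)) -> (forall k, 0 <= l k) ->
  \sum_(k < K) l k * L k (x + t *: d) - \sum_(k < K) l k * L k x <=
  t * (\sum_(k < K) l k * dotr (grad (L k) x) d) +
  t ^+ 2 * ((\sum_(k < K) l k * nu k) / 2 * nsq d).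
Proof.
move=> sm l0; rewrite -sumrB.
apply: (@le_trans _ _ (\sum_(k < K) l k * (t * dotr (grad (L k) x) d
   + nu k / 2 * t ^+ 2 * nsq d))).
  apply: ler_sum => k _; rewrite -mulrBr; apply: ler_wpM2l => //.
  exact: descent_scaled.
rewrite le_eqVlt; apply/orP; left; apply/eqP.
rewrite !mulr_suml !mulr_sumr -big_split /=; apply: eq_bigr => k _; ring.
Qed.


Lemma supnorm_ge K (x : 'I_K -> R) i : `|x i| <= supnorm x.
Proof.
rewrite /supnorm (bigD1 i) //=.
by case: (lerP `|x i| (\big[Num.max/0]_(j < K | j != i) `|x j|)) => // /ltW.
Qed.

Lemma vol_ge0 K (A : set ('I_K -> R)) : (0 <= vol A)%E.
Proof.
apply: le_ereal_inf_tmp => v [a [b [_ ->]]].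
by apply: nneseries_ge0 => n _ _; rewrite lee_fin box_vol_ge0.
Qed.

End S.
Unset Implicit Arguments.
Set Strict Implicit.
Theorem proposition1 (R : realType) (K m : nat) (hK : (0 < K)%N) (hm : (0 < m)%N)
  (L : 'I_K -> 'rV[R]_m -> R) (nu : 'I_K -> R)
  (hL0 : forall k x, 0 <= L k x)
  (hLs : forall k, smooth (nu k) (L k))
  (s : ('I_K -> R) -> ('I_K -> R) -> R)
  (th thh : ('I_K -> R) -> 'rV[R]_m)
  (hmin : forall l, simplex l -> forall t, s l (fun k => L k (th l)) <= s l (fun k => L k t)) :
  let Lv := fun t : 'rV[R]_m => (fun k => L k t) : 'I_K -> R in
  let G := fun k => ereal_sup [set (l2norm (grad (L k) (th l)))%:E | l in simplex (R:=R) (K:=K)] in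
  let eps := fun (g : \bar R) (n : R) (l : 'I_K -> R) =>
     (g * (l2norm (thh l - th l))%:E + (n / 2 * (l2norm (thh l - th l)) ^+ 2)%:E)%E in
  let epsmax := ereal_sup [set e | exists (k : 'I_K) (l : 'I_K -> R), simplex l /\ e = eps (G k) (nu k) l] in
  (* 1. linear scalarization *)
  ((forall l, simplex l -> forall t, linscal l (Lv (th l)) <= linscal l (Lv t)) ->
   forall l, simplex l ->
     ((linscal l (Lv (thh l)) - linscal l (Lv (th l)))%:E
       <= eps 0%E (\sum_(k < K) l k * nu k)%R l)%E)
  /\
  (* 2. *)
  (forall k l, simplex l -> ((L k (thh l) - L k (th l))%:E <= eps (G k) (nu k) l)%E)
  /\
  (* 3. hypervolume *)
  (forall r : R,
     (2%:E * ereal_sup [set (supnorm (Lv (th l)))%:E | l in simplex (R:=R) (K:=K)] <= r%:E)%E ->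
     (forall l, simplex l -> forall k, 0 <= L k (thh l) <= r) ->
     (epsmax <= (r / 2)%:E)%E ->
     (((1 - 2 * fine epsmax / r) ^+ K)%:E
        * HV r [set Lv (th l) | l in simplex (R:=R) (K:=K)]
      <= HV r [set Lv (thh l) | l in simplex (R:=R) (K:=K)])%E).
Proof.
Proof.
move=> Lv G eps epsmax.
have nu0 : forall k, 0 <= nu k := fun k => smooth_nu_ge0 hm (hLs k).
have G0 : forall k l, simplex l ->
    ((l2norm (grad (L k) (th l)))%:E <= G k)%E.
  by move=> k l hl; apply: ereal_sup_ubound; exists l.
have P2 : forall k l, simplex l ->
    ((L k (thh l) - L k (th l))%:E <= eps (G k) (nu k) l)%E.
  move=> k l hl.
  have := descent (th l) (thh l - th l) (hLs k).
  rewrite [th l + _]addrC subrK -l2norm_sqr => H.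
  have cs := cauchy_schwarz (grad (L k) (th l)) (thh l - th l).
  apply: (@le_trans _ _ ((l2norm (grad (L k) (th l)) * l2norm (thh l - th l)
     + nu k / 2 * l2norm (thh l - th l) ^+ 2)%:E)).
    rewrite lee_fin; lra.
  rewrite EFinD /eps; apply: leeD => //.
  rewrite EFinM; apply: lee_wpmul2r; first by rewrite lee_fin l2norm_ge0.
  exact: G0.
split; [|split].
- move=> hlin l hl; rewrite /eps mul0e add0e lee_fin.
  have [l0 _] := hl.
  set x := th l; set d := thh l - th l.
  set S := \sum_(k < K) l k * dotr (grad (L k) x) d.
  set C := (\sum_(k < K) l k * nu k) / 2 * nsq d.
  have key := fun t => lin_bound x d t hLs l0.
  have C0 : 0 <= C.
    apply: mulr_ge0; last exact: nsq_ge0.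
    apply: divr_ge0 => //; apply: sumr_ge0 => k _; exact: mulr_ge0.
  have S0 : S <= 0.
    rewrite leNgt; apply/negP => Sp.
    set t := S / (2 * (C + 1)).
    have ht : t * (2 * (C + 1)) = S.
      rewrite /t; field; lra.
    have tp : 0 < t by rewrite /t divr_gt0 //; lra.
    have := key (- t); have := hlin l hl (x + (- t) *: d).
    rewrite /linscal /Lv -/S -/C => h1 h2.
    nra.
  have := key 1; rewrite scale1r /d [th l + _]addrC subrK -/x -/d -/S -/C.
  rewrite /linscal /Lv l2norm_sqr => h.
  rewrite -/C; lra.
- exact: P2.
move=> r hr hbox heps.
pose l0 : 'I_K -> R := fun _ => K%:R^-1.
have hl0 : simplex l0.
  split; first by move=> k; rewrite invr_ge0.
  rewrite sumr_const card_ord -[_ *+ _]mulr_natr mulVf //.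
  by rewrite pnatr_eq0 -lt0n.
pose k0 : 'I_K := Ordinal hK.
have eps0 : forall k l, simplex l -> (0 <= eps (G k) (nu k) l)%E.
  move=> k l hl; apply: adde_ge0.
    apply: mule_ge0; last by rewrite lee_fin l2norm_ge0.
    by apply: le_trans (G0 k l hl); rewrite lee_fin l2norm_ge0.
  rewrite lee_fin; apply: mulr_ge0; last exact: exprn_ge0 (l2norm_ge0 _).
  by apply: divr_ge0.
have epsub : forall k l, simplex l -> (eps (G k) (nu k) l <= epsmax)%E.
  by move=> k l hl; apply: ereal_sup_ubound; exists k, l.
have em0 : (0 <= epsmax)%E := le_trans (eps0 k0 l0 hl0) (epsub k0 l0 hl0).
have emfin : epsmax = (fine epsmax)%:E.
  by rewrite fineK // ge0_fin_numE // (le_lt_trans heps) // ltey.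
set e := fine epsmax.
have e0 : 0 <= e by rewrite -lee_fin -emfin.
have er : e <= r / 2 by rewrite -lee_fin -emfin.
have Lhat : forall k l, simplex l -> L k (thh l) <= L k (th l) + e.
  move=> k l hl; have := le_trans (P2 k l hl) (epsub k l hl).
  rewrite emfin lee_fin -/e; lra.
have Lr2 : forall k l, simplex l -> L k (th l) <= r / 2.
  move=> k l hl.
  have h1 : ((supnorm (Lv (th l)))%:E <=
     ereal_sup [set (supnorm (Lv (th l0)))%:E | l0 in simplex (R:=R) (K:=K)])%E.
    by apply: ereal_sup_ubound; exists l.
  have h2 : ((2 * supnorm (Lv (th l)))%:E <= r%:E)%E.
    apply: le_trans hr; rewrite EFinM; apply: lee_wpmul2l => //.
  rewrite lee_fin in h2.
  have := supnorm_ge (Lv (th l)) k; rewrite /Lv ger0_norm ?hL0 // => h3.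
  lra.
have r0 : 0 <= r by have /andP[h1 h2] := hbox l0 hl0 k0; exact: le_trans h2.
have [a [a0 a1 ar]] : exists a, [/\ 0 <= a, a <= 1 & a * r = 2 * e /\ 2 * e / r = a].
  have [r00|rp] := eqVneq r 0.
    rewrite r00 mul0r in er *.
    have -> : e = 0 by apply/eqP; rewrite eq_le e0 andbT.
    by exists 0; split => //; rewrite !mulr0 ?mul0r.
  have rp' : 0 < r by rewrite lt_def rp r0.
  exists (2 * e / r); split.
  - by rewrite divr_ge0 // mulr_ge0.
  - by rewrite ler_pdivrMr // mul1r; lra.
  - by split => //; field.
have [ar1 ar2] := ar.
rewrite ar2.
have [c0|cp] := eqVneq (1 - a) 0.
  rewrite c0 expr0n /=.
  have -> : (K == 0%N) = false by apply/negbTE; rewrite -lt0n.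
  by rewrite mul0e; exact: vol_ge0.
have cp' : 0 < 1 - a by rewrite lt_def cp /=; lra.
apply: (vol_scale (e0 := 2 * e) cp').
move=> y [hy [s0 [l hl <-] hs]]; split.
  move=> i; have /andP[y0 yr] := hy i; apply/andP; split; nra.
exists (Lv (thh l)); first by exists l.
move=> i; have := Lhat i l hl; have := Lr2 i l hl; have := hs i.
have := hL0 i (th l); rewrite /Lv => h1 h2 h3 h4.
have /andP[y0 yr] := hy i.
nra.
Qed.
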